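(* Let $m,n\ge0$, $\phi=w_m^+$ and $\tau=w_n^-$. Then the minimal element (in Bruhat order) of $W_{\Lambda_1}\,I(\tau^{-1})\,\phi\,W_{\Lambda_0}$ is $w_\ell^+$, where $\ell=\max(0,m-n)$ if $m\equiv n\pmod 2$, and $\ell=\max(0,m-n-1)$ if $m\not\equiv n\pmod 2$.
   Context: $W$ is the Weyl group of the affine Kac–Moody algebra $\widehat{\mathfrak{sl}_2}$, generated by the simple reflections $s_0,s_1$; $W_{\Lambda_0}$ and $W_{\Lambda_1}$ are the stabilizers of the fundamental weights $\Lambda_0,\Lambda_1$ (generated by $s_1$, resp. $s_0$). For $k\ge0$, $w_k^+$ (resp. $w_k^-$) is the alternating product of $k$ simple reflections ending on the right with $s_0$ (resp. $s_1$), e.g. $w_3^+=s_0s_1s_0$; $w_0^\pm=1$. For $x\in W$, $I(x)=\{\sigma\in W:\sigma\le x\}$ is the Bruhat ideal generated by $x$, and for $y\in W$, $I(x)y=\{\sigma y:\sigma\in I(x)\}$. *)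

(* Defs.v *)
(* Concrete model of the affine Weyl group W of affine sl_2,
   i.e. the infinite dihedral Coxeter group <s0, s1 | s0^2 = s1^2 = 1>
   (no braid relation since m(s0,s1) = infinity).
   An element is represented by its (unique) reduced word: a sequence of
   letters (false = s_0, true = s_1) with no two equal adjacent letters. *)
From mathcomp Require Import all_boot.
Set Implicit Arguments. Unset Strict Implicit. Unset Printing Implicit Defensive.

Definition letter := bool.
Definition s0 : letter := false.
Definition s1 : letter := true.

Definition reduced (w : seq letter) : bool := sorted (fun a b => a != b) w.

(* free reduction (cancel s_i s_i = 1); stack kept in reversed order *)
Definition push (st : seq letter) (x : letter) : seq letter :=
  match st with
  | y :: t => if y == x then t else x :: st
  | [::] => [:: x]
  end.
Definition red (s : seq letter) : seq letter := rev (foldl push [::] s).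

Definition mulW (u v : seq letter) : seq letter := red (u ++ v).
Definition invW (w : seq letter) : seq letter := rev w.

(* Bruhat order, via the subword property (reduced words are unique here) *)
Definition bruhat (u v : seq letter) : Prop := subseq u v.

Definition Ideal (x : seq letter) (s : seq letter) : Prop :=
  reduced s /\ bruhat s x.

Definition parab (i : letter) (w : seq letter) : Prop :=
  exists s : seq letter, all (fun x => x == i) s /\ w = red s.

Definition WLam0 := parab s1.
Definition WLam1 := parab s0.

(* w_k^+ : alternating product of k simple reflections ending with s_0;
   w_k^- : ending with s_1 *)
Definition w_plus (k : nat) : seq letter := mkseq (fun i => odd (k.-1 - i)) k.
Definition w_minus (k : nat) : seq letter := mkseq (fun i => ~~ odd (k.-1 - i)) k.

Definition dset (tau phi : seq letter) (x : seq letter) : Prop :=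
  exists u sigma v, WLam1 u /\ Ideal (invW tau) sigma /\ WLam0 v /\
    x = mulW (mulW (mulW u sigma) phi) v.

Definition bruhat_min (S : seq letter -> Prop) (x : seq letter) : Prop :=
  S x /\ forall y, S y -> bruhat x y.

(* Main.v *)
From Stdlib Require Import ZArith Lia.
Require Import Defs.
From mathcomp Require Import all_boot zify.
Set Implicit Arguments. Unset Strict Implicit.

Arguments Z.add : simpl never.
Arguments Z.sub : simpl never.
Arguments Z.opp : simpl never.
Arguments Z.mul : simpl never.
Definition sgZ (k : Z) : Z := if Z.even k then 1%Z else (-1)%Z.
Definition star (a b : Z) : Z := (a + sgZ a * b)%Z.
Lemma even_ex x : Z.even x = true -> exists k, x = (2*k)%Z.
Proof. move/Z.even_spec => [k ->]; by exists k. Qed.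
Lemma odd_ex x : Z.even x = false -> exists k, x = (2*k+1)%Z.
Proof. move=> h. have : Z.odd x = true by rewrite -Z.negb_even h.
move/Z.odd_spec => [k ->]; by exists k. Qed.

Definition idx (w : seq bool) : Z :=
  foldr (fun x k => if x then (1 - k)%Z else (-1 - k)%Z) 0%Z w.
Definition sg (w : seq bool) : Z := if odd (size w) then (-1)%Z else 1%Z.

Lemma idx_cat a c : idx (a ++ c) = (idx a + sg a * idx c)%Z.
Proof.
elim: a => [|x a IH] /=; first by rewrite /sg /=; lia.
rewrite IH /sg /=; case: x; case: (odd (size a)) => /=; lia.
Qed.

Lemma sg_cat a c : sg (a ++ c) = (sg a * sg c)%Z.
Proof. rewrite /sg size_cat oddD; case: odd; case: odd => //. Qed.

Lemma par w : (sg w = 1 /\ exists k, idx w = 2*k)%Z \/ (sg w = -1 /\ exists k, idx w = 2*k+1)%Z.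
Proof.
elim: w => [|x w [[h [k e]]|[h [k e]]]]; first by left; split => //; exists 0%Z.
- right; move: h; rewrite /sg /=; case: odd => // _; split => //; case: x;
  [exists (-k)%Z | exists (-k-1)%Z]; lia.
- left; move: h; rewrite /sg /=; case: odd => // _; split => //; case: x;
  [exists (-k)%Z | exists (-k-1)%Z]; lia.
Qed.

Lemma sg_sgZ w : sg w = sgZ (idx w).
Proof.
rewrite /sgZ; case: (par w) => [[-> [k ->]]|[-> [k ->]]].
- by rewrite Z.even_mul.
- by rewrite Z.even_add Z.even_mul.
Qed.

Lemma push_ok st x : idx (rev (push st x)) = idx (rcons (rev st) x) /\
   sg (rev (push st x)) = sg (rcons (rev st) x).
Proof.
case: st => [|y t] //=.
case: eqP => [<-|_]; last by rewrite rev_cons.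
rewrite rev_cons -!cats1 -catA idx_cat sg_cat /=.
rewrite /sg /=; case: y; case: odd; split; lia.
Qed.

Lemma foldl_ok s st : idx (rev (foldl push st s)) = idx (rev st ++ s) /\
   sg (rev (foldl push st s)) = sg (rev st ++ s).
Proof.
elim: s st => [|x s IH] st /=; first by rewrite cats0.
have [h1 h2] := push_ok st x; have [i1 i2] := IH (push st x).
by rewrite i1 i2 idx_cat sg_cat h1 h2 -idx_cat -sg_cat cat_rcons.
Qed.

Lemma mulW_idx a b : idx (mulW a b) = star (idx a) (idx b).
Proof. by rewrite /mulW /red (foldl_ok (a ++ b) [::]).1 /= idx_cat sg_sgZ. Qed.

Lemma red_idx s : idx (red s) = idx s.
Proof. by rewrite /red (foldl_ok s [::]).1. Qed.

Lemma push_sorted st x : sorted (fun z y : bool => y != z) st ->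
  sorted (fun z y : bool => y != z) (push st x).
Proof.
case: st => [|y t] //=.
case: eqP => [->|ne] h; first exact: path_sorted h.
rewrite /= h andbT; apply/eqP => e; exact: ne.
Qed.

Lemma red_reduced s : reduced (red s).
Proof.
rewrite /reduced /red rev_sorted.
have : sorted (fun z y : bool => y != z) [::] by [].
elim: s [::] => [|x s IH] st h //=.
by apply: IH; apply: push_sorted.
Qed.

Lemma reduced_idx w : reduced w -> idx w = match w with [::] => 0%Z
   | x :: _ => if x then Z.of_nat (size w) else (- Z.of_nat (size w))%Z end.
Proof.
elim: w => [|x w IH] // h.
have hw : reduced w by exact: path_sorted h.
rewrite /= (IH hw).
case: w h IH hw => [|y w] /=; first by case: x => _ _ _; rewrite /idx /=; lia.
by case: x; case: y => //= _ _ _; lia.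
Qed.

Lemma size_idx w : reduced w -> Z.of_nat (size w) = Z.abs (idx w).
Proof. move=> h; rewrite (reduced_idx h); clear h; case: w => [|[] w] /=; lia. Qed.

Lemma reduced_inj a b : reduced a -> reduced b -> idx a = idx b -> a = b.
Proof.
elim: a b => [|x a IH] [|y b] ha hb e //.
- have := reduced_idx hb; rewrite -e; clear; case: y => /=; lia.
- have := reduced_idx ha; rewrite e; clear; case: x => /=; lia.
have ea := reduced_idx ha; have eb := reduced_idx hb.
have exy : x = y.
  move: ea eb; rewrite e => ea eb; clear -ea eb.
  case: x ea => /=; case: y eb => /= eb ea //; lia.
subst y; congr (_ :: _); apply: IH; [exact: path_sorted ha|exact: path_sorted hb|].
by move: e; rewrite /=; clear; case: x; lia.
Qed.

Lemma reduced_sub a b : reduced a -> reduced b -> (size a < size b)%N -> subseq a b.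
Proof.
elim: b a => [|y b IH] [|x a] ha hb h //=.
have hb' : reduced b by exact: path_sorted hb.
case: eqP => [e|ne].
  by apply: IH => //; exact: path_sorted ha.
case: b IH hb hb' h => [|z b] IH hb hb' h; first by [].
have ez : z = x by move: hb ne; clear; case: x; case: y; case: z => //= _ [].
have [lt|eq] : (size (x :: a) < size (z :: b))%N \/ size (x :: a) = size (z :: b) by move: h => /=; lia.
  exact: IH.
have -> : x :: a = z :: b.
  apply: reduced_inj => //; rewrite (reduced_idx ha) (reduced_idx hb') ez eq //.
exact: subseq_refl.
Qed.

Lemma w_plusS m : w_plus m.+1 = odd m :: w_plus m.
Proof.
rewrite /w_plus /mkseq /=. rewrite subn0; congr (_ :: _).
rewrite -[1%N]addn0 iotaDl -map_comp; apply: eq_map => i /=; congr odd; lia.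
Qed.

Lemma w_minusS m : w_minus m.+1 = ~~ odd m :: w_minus m.
Proof.
rewrite /w_minus /mkseq /=. rewrite subn0; congr (_ :: _).
rewrite -[1%N]addn0 iotaDl -map_comp; apply: eq_map => i /=; congr (~~ odd _); lia.
Qed.

Lemma idx_w_plus m : idx (w_plus m) = if odd m then (- Z.of_nat m)%Z else Z.of_nat m.
Proof.
elim: m => [|m IH] //. rewrite w_plusS /= IH; case: (odd m) => /=; lia.
Qed.

Lemma reduced_w_plus m : reduced (w_plus m).
Proof.
elim: m => [|m IH] //. rewrite w_plusS. case: m IH => [|m] //.
rewrite w_plusS /= => ->. by rewrite andbT; case: odd.
Qed.

Lemma reduced_rw n : reduced (rev (w_minus n)).
Proof.
rewrite /reduced rev_sorted.
elim: n => [|n IH] //. rewrite w_minusS. case: n IH => [|n] //.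
rewrite w_minusS /= => ->. by rewrite andbT; case: odd.
Qed.

Lemma idx_rw n : idx (rev (w_minus n)) = Z.of_nat n.
Proof.
elim: n => [|n IH] //. rewrite w_minusS rev_cons -cats1 idx_cat IH /sg size_rev size_mkseq.
case: (odd n) => /=; lia.
Qed.

Lemma size_rw n : size (rev (w_minus n)) = n.
Proof. by rewrite size_rev size_mkseq. Qed.

Fixpoint alt (b : bool) (k : nat) : seq bool :=
  if k is k'.+1 then b :: alt (~~ b) k' else [::].

Lemma alt_ok k : forall b, reduced (alt b k) /\
  idx (alt b k) = if b then Z.of_nat k else (- Z.of_nat k)%Z.
Proof.
elim: k => [|k IH] b; first by case: b.
have [r e] := IH (~~ b). split.
  move: r; rewrite /reduced /=; clear; case: k => [|k] /=; first by [].
  by move=> ->; rewrite andbT; case: b.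
by rewrite /= e; clear; case: b => /=; lia.
Qed.

Definition zw (z : Z) : seq bool :=
  if (0 <=? z)%Z then alt true (Z.to_nat z) else alt false (Z.to_nat (- z)).

Lemma zw_ok z : reduced (zw z) /\ idx (zw z) = z.
Proof.
rewrite /zw; case: (Z.leb_spec 0 z) => h.
  have [r e] := alt_ok (Z.to_nat z) true; split => //; rewrite e; lia.
have [r e] := alt_ok (Z.to_nat (-z)) false; split => //; rewrite e; lia.
Qed.

Lemma all_false s : all (fun x => x == s0) s -> (idx s = 0 \/ idx s = -1)%Z.
Proof.
elim: s => [|x s IH] /=; first by left.
case/andP => /eqP -> /IH [] ->; [right|left]; rewrite /=; lia.
Qed.

Lemma all_true s : all (fun x => x == s1) s -> (idx s = 0 \/ idx s = 1)%Z.
Proof.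
elim: s => [|x s IH] /=; first by left.
case/andP => /eqP -> /IH [] ->; [right|left]; rewrite /=; lia.
Qed.

Lemma parN n : (odd n = false /\ exists k, n = 2*k)%N \/ (odd n = true /\ exists k, n = 2*k+1)%N.
Proof.
elim: n => [|n [[h [k e]]|[h [k e]]]]; [left; split=>//; exists 0%N; lia| right|left];
rewrite /= ?h; split=>//; [exists k| exists k.+1]; lia.
Qed.

Lemma idx_par (l : nat) : ((exists k, Z.of_nat l = 2*k /\ idx (w_plus l) = Z.of_nat l) \/
   (exists k, Z.of_nat l = 2*k+1 /\ idx (w_plus l) = - Z.of_nat l))%Z.
Proof.
rewrite idx_w_plus; case: (parN l) => [[-> [k e]]|[-> [k e]]];
[left|right]; exists (Z.of_nat k); lia.
Qed.

Lemma size_wp l : size (w_plus l) = l.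
Proof. by rewrite size_mkseq. Qed.
Ltac evs := repeat match goal with
  | |- context [Z.even ?x] =>
     let E := fresh "E" in
     destruct (Z.even x) eqn:E;
     [ apply even_ex in E; destruct E as [? E] | apply odd_ex in E; destruct E as [? E] ]
  end.

Lemma arith_min (m n l tgt ip iu sx iv : Z) :
  (0 <= m)%Z -> (0 <= n)%Z ->
  ((exists k, m = 2*k /\ ip = m) \/ (exists k, m = 2*k+1 /\ ip = -m))%Z ->
  ((exists k, m + n = 2*k /\ l = Z.max 0 (m-n)) \/ (exists k, m+n = 2*k+1 /\ l = Z.max 0 (m-n-1)))%Z ->
  ((exists k, l = 2*k /\ tgt = l) \/ (exists k, l = 2*k+1 /\ tgt = -l))%Z ->
  (iu = 0 \/ iu = -1)%Z -> (iv = 0 \/ iv = 1)%Z -> (Z.abs sx < n \/ sx = n)%Z ->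
  let r := star (star (star iu sx) ip) iv in
  r = tgt \/ (l < Z.abs r)%Z.
Proof.
move=> hm hn [[km [Em Ep]]|[km [Em Ep]]] [[kl [El Ell]]|[kl [El Ell]]] [[kt [Et Ett]]|[kt [Et Ett]]] Hu Hv Hs /=; subst ip tgt;
destruct Hu as [->| ->]; destruct Hv as [->| ->];
rewrite /star /sgZ; evs; nia.
Qed.

Lemma arith_mem (m n l tgt ip : Z) :
  (0 <= m)%Z -> (0 <= n)%Z ->
  ((exists k, m = 2*k /\ ip = m) \/ (exists k, m = 2*k+1 /\ ip = -m))%Z ->
  ((exists k, m + n = 2*k /\ l = Z.max 0 (m-n)) \/ (exists k, m+n = 2*k+1 /\ l = Z.max 0 (m-n-1)))%Z ->
  ((exists k, l = 2*k /\ tgt = l) \/ (exists k, l = 2*k+1 /\ tgt = -l))%Z ->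
  exists iu sx, (iu = 0 \/ iu = -1)%Z /\ (Z.abs sx < n \/ sx = n)%Z /\
    star (star (star iu sx) ip) 0 = tgt.
Proof.
move=> hm hn [[km [Em Ep]]|[km [Em Ep]]] [[kl [El Ell]]|[kl [El Ell]]] [[kt [Et Ett]]|[kt [Et Ett]]]; subst ip tgt;
(destruct (Z_lt_le_dec m n) as [Hmn|Hmn];
 [ exists 0%Z, (-m)%Z
 | destruct (Z.eq_dec n 0) as [Hn0|Hn0];
   [ first [ exists 0%Z, 0%Z; split; [lia|split; [lia|]]; rewrite /star /sgZ; evs; nia
           | exists (-1)%Z, 0%Z ]
   | try (exists (-1)%Z, (n-1)%Z; split; [lia|split; [lia|]]; rewrite /star /sgZ; evs; nia);
     exists (-1)%Z, n ] ]);
 (split; [lia|split; [lia|]]); rewrite /star /sgZ; evs; nia.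
Qed.

Lemma mulW3 u s p v : idx (mulW (mulW (mulW u s) p) v) = star (star (star (idx u) (idx s)) (idx p)) (idx v).
Proof. by rewrite !mulW_idx. Qed.

Theorem mainTheorem8 (m n : nat) :
  bruhat_min (dset (w_minus n) (w_plus m))
    (w_plus (if ~~ odd (m + n) then m - n else m - n.+1)).
Proof.
set l := (if ~~ odd (m + n) then m - n else m - n.+1).
have Hm : ((exists k, Z.of_nat m = 2*k /\ idx (w_plus m) = Z.of_nat m) \/
   (exists k, Z.of_nat m = 2*k+1 /\ idx (w_plus m) = - Z.of_nat m))%Z := idx_par m.
have Ht := idx_par l.
have Hl : ((exists k, Z.of_nat m + Z.of_nat n = 2*k /\ Z.of_nat l = Z.max 0 (Z.of_nat m - Z.of_nat n)) \/
   (exists k, Z.of_nat m + Z.of_nat n = 2*k+1 /\ Z.of_nat l = Z.max 0 (Z.of_nat m - Z.of_nat n - 1)))%Z.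
  rewrite /l oddD.
  case: (parN m) => [[-> [a ea]]|[-> [a ea]]]; case: (parN n) => [[-> [b eb]]|[-> [b eb]]] /=;
  [left; exists (Z.of_nat (a+b)) | right; exists (Z.of_nat (a+b)) | right; exists (Z.of_nat (a+b)) | left; exists (Z.of_nat (a+b+1))]; lia.
have hm0 : (0 <= Z.of_nat m)%Z by lia.
have hn0 : (0 <= Z.of_nat n)%Z by lia.
split.
- have [iu [sx [Hu [Hs E]]]] := arith_mem hm0 hn0 Hm Hl Ht.
  set u := if (iu =? 0)%Z then [::] else [:: s0].
  have ue : red u = u by rewrite /u; case: (iu =? 0)%Z.
  have ui : idx u = iu by rewrite /u; case: (Z.eqb_spec iu 0); case: Hu => ->.
  have [zr zi] := zw_ok sx.
  exists u, (zw sx), [::]; split; [exists u; split => //; rewrite /u; by case: (iu =? 0)%Z|].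
  split.
    split => //. rewrite /invW.
    case: Hs => hs.
      apply: reduced_sub => //; first exact: reduced_rw.
      rewrite size_rw; have := size_idx zr; rewrite zi; lia.
    have -> : zw sx = rev (w_minus n) by apply: reduced_inj => //; [exact: reduced_rw|rewrite zi idx_rw].
    exact: subseq_refl.
  split; first by exists [::].
  apply: reduced_inj; [exact: reduced_w_plus|exact: red_reduced|].
  rewrite -E mulW3 ui zi /=.
  by [].
- move=> y [u [s [v [[su [hsu ->]] [[hsr hss] [[sv [hsv ->]] ->]]]]]].
  have Hu : (idx (red su) = 0 \/ idx (red su) = -1)%Z by rewrite red_idx; exact: all_false.
  have Hv : (idx (red sv) = 0 \/ idx (red sv) = 1)%Z by rewrite red_idx; exact: all_true.
  have Hs : (Z.abs (idx s) < Z.of_nat n \/ idx s = Z.of_nat n)%Z.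
    have [le eqi] := size_subseq_leqif hss.
    rewrite /invW size_rw in le eqi.
    case: (ltnP (size s) n) => lt.
      left; rewrite -size_idx //; lia.
    right; have /eqP -> : s == rev (w_minus n) by rewrite -eqi eqn_leq le lt.
    exact: idx_rw.
  have ip : ((exists k, Z.of_nat m = 2*k /\ idx (w_plus m) = Z.of_nat m) \/
   (exists k, Z.of_nat m = 2*k+1 /\ idx (w_plus m) = - Z.of_nat m))%Z := Hm.
  have Ht' : ((exists k, Z.of_nat l = 2*k /\ idx (w_plus l) = Z.of_nat l) \/
   (exists k, Z.of_nat l = 2*k+1 /\ idx (w_plus l) = - Z.of_nat l))%Z := Ht.
  have := arith_min hm0 hn0 Hm Hl Ht Hu Hv Hs.
  rewrite /= -!mulW_idx.
  set y0 := mulW _ _.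
  have yr : reduced y0 by exact: red_reduced.
  case => [e|lt].
    have -> : y0 = w_plus l by apply: reduced_inj => //; exact: reduced_w_plus.
    exact: subseq_refl.
  apply: reduced_sub => //; first exact: reduced_w_plus.
  have := size_idx yr; rewrite size_wp; lia.
Qed.
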